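(* Let $M$ be a perfect matching in a graph $G$ and let $A \subseteq V(M)$ be a set containing at most one vertex from each edge of $M$. Suppose that $W$ is a shifted $M$-walk both of whose endpoints lie in $A$. Then $W$ contains a shifted $M$-walk $W'$ such that both endpoints of $W'$ lie in $A$ and no other vertices of $W'$ lie in $A$.
   Context: Given a perfect matching $M$ in a graph $G$, a shifted $M$-walk with endpoints $a = v_1$ and $b = v_{2\ell}$ is a walk $v_1 v_2 \dots v_{2\ell}$ in $G$ such that $v_{2i}v_{2i+1} \in M$ for every $1 \leq i \leq \ell - 1$ and $v_{2i-1}v_{2i} \notin M$ for every $1 \leq i \leq \ell$. *)

(* Defs.v *)
From mathcomp Require Import all_boot.
Set Implicit Arguments. Unset Strict Implicit. Unset Printing Implicit Defensive.

Definition simple_graph (T : finType) (e : rel T) : Prop :=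
  symmetric e /\ irreflexive e.

Definition perfect_matching (T : finType) (e M : rel T) : Prop :=
  [/\ symmetric M, (forall u v, M u v -> e u v) & (forall v, exists! u, M v u)].

Definition at_most_one_per_edge (T : finType) (M : rel T) (A : {set T}) : Prop :=
  forall u v, M u v -> ~~ ((u \in A) && (v \in A)).

(* s = [:: v_1; ...; v_{2l}] (l >= 1) is a shifted M-walk in G: with 0-based
   index k, the step s_k s_{k+1} is an edge of G not in M when k is even
   (i.e. v_{2i-1} v_{2i}) and an edge of M when k is odd (i.e. v_{2i} v_{2i+1}). *)
Definition shifted_walk (T : finType) (e M : rel T) (s : seq T) : bool :=
  if s is x0 :: _ then
    ~~ odd (size s) &&
    all (fun k => if odd k then M (nth x0 s k) (nth x0 s k.+1)
                  else e (nth x0 s k) (nth x0 s k.+1) && ~~ M (nth x0 s k) (nth x0 s k.+1))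
        (iota 0 (size s).-1)
  else false.

Definition endpoints_in (T : finType) (A : {set T}) (s : seq T) : Prop :=
  exists x0, [/\ s <> [::], head x0 s \in A & last x0 s \in A].

Definition interior_avoids (T : finType) (A : {set T}) (s : seq T) : Prop :=
  forall x0 k, 0 < k -> k < (size s).-1 -> nth x0 s k \notin A.

(* Main.v *)
Require Import Defs.
From mathcomp Require Import all_boot.
From mathcomp Require Import zify.

Lemma comb (P : nat -> bool) j : odd j -> P j ->
  forall d m i, j - m = d -> ~~ odd i -> P i -> i < m <= j ->
  (forall k, i < k < m -> ~~ P k) ->
  exists i' j', [/\ ~~ odd i', odd j', i' < j' <= j, P i' && P j' &
     (forall k, i' < k < j' -> ~~ P k)] /\ i <= i'.
Proof.
move=> oj Pj; elim=> [|d IH] m i Hd oi Pi /andP[im mj] Hk.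
  have mj' : m = j by lia.
  subst m; exists i, j; split=> //; split=> //; [lia| by rewrite Pi Pj].
have mlt : m < j by lia.
case Pm: (P m).
  case om: (odd m).
    exists i, m; split=> //; split=> //; [lia|by rewrite Pi Pm].
  have [i' [j' [H1 H2]]] := IH (m.+1) m ltac:(lia) (negbT om) Pm ltac:(lia)
    ltac:(move=> k; lia).
  exists i', j'; split=> //; lia.
have Hk' : forall k, i < k < m.+1 -> ~~ P k.
  move=> k hk; case: (ltngtP k m) => km.
  - by apply: Hk; lia.
  - lia.
  - by rewrite km Pm.
have [i' [j' [H1 H2]]] := IH (m.+1) i ltac:(lia) oi Pi ltac:(lia) Hk'.
by exists i', j'.
Qed.

Theorem lemma5p2 (T : finType) (e M : rel T) (A : {set T}) (W : seq T) :
  simple_graph e ->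
  perfect_matching e M ->
  at_most_one_per_edge M A ->
  shifted_walk e M W ->
  endpoints_in A W ->
  exists W' : seq T,
    [/\ infix W' W, shifted_walk e M W', endpoints_in A W' & interior_avoids A W'].
Proof.
move=> _ _ _ HW [z [Wn hA lA]].
case: W HW Wn hA lA => [//|x0 W1] /= /andP[ev /allP Hall] _ hA lA.
set W := x0 :: W1 in ev Hall lA *.
have sW : size W = (size W1).+1 by [].
pose P p := nth x0 W p \in A.
have oj : odd (size W1) by move: ev => /=; rewrite negbK.
have sW1 : 0 < size W1 by case: (size W1) oj.
have Pj : P (size W1) by rewrite /P /W -(last_nth x0 x0).
have [i [j [[oi ojj /andP[ij jn] /andP[Pi Pj'] Hint] _]]] :=
  @comb P (size W1) oj Pj (size W1 - 1) 1 0 (erefl _) isT hA ltac:(lia) ltac:(lia).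
pose W' := take (j - i).+1 (drop i W).
have sW' : size W' = (j - i).+1 by rewrite size_take size_drop sW; case: ltnP; lia.
have nW' : forall y k, k < size W' -> nth y W' k = nth x0 W (i + k).
  move=> y k hk; rewrite (set_nth_default x0) // nth_take; last by lia.
  by rewrite nth_drop.
exists W'; split.
- exact: (prefix_infix_trans (prefix_take (drop i W) (j - i).+1) (infix_drop W i)).
- case EW: W' => [|y t]; first by move: sW'; rewrite EW.
  rewrite -EW /shifted_walk EW -EW sW' /=; apply/andP; split.
    by rewrite negbK oddB ?(ltnW ij) // ojj (negbTE oi).
  apply/allP => k; rewrite mem_iota /= => hk.
  rewrite !nW' ?sW'; try lia.
  have := Hall (i + k); rewrite mem_iota /= => /(_ ltac:(lia)).
  by rewrite addnS oddD (negbTE oi).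
- exists x0; split.
  + by move=> E; move: sW'; rewrite E.
  + by rewrite -nth0 nW' ?sW' // addn0.
  + by rewrite -nth_last nW' sW' //= subnKC //; lia.
- move=> y k k0 hk; rewrite nW'; last by lia.
  apply: Hint; move: hk; rewrite sW' /=; lia.
Qed.
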